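(* Let $D$ be a filter on a set $I$, let $N$ be a model, $\lambda=\|N\|+|\tau_N|$, and let $\Delta$ be the set of atomic formulas of $\mathbb L(\tau_N)$. Let $\mathscr T=({}^{\omega>}\lambda,\trianglelefteq)^I/D$ be the reduced power of the tree of finite sequences of ordinals $<\lambda$ ordered by initial segment, and let $\kappa=\min\{\mathfrak t_{\mathscr T},\mathfrak p_{\mathscr T}\}$. Then the reduced power $N^I/D$ is $(\kappa,1,\Delta)$-saturated: every set of fewer than $\kappa$ formulas $\varphi(x,\bar a)$, with $\varphi(x,\bar y)$ atomic and $\bar a$ from $N^I/D$, which is finitely satisfiable in $N^I/D$, is realized in $N^I/D$.
   Context: In the reduced power, $f/D\trianglelefteq g/D$ iff $\{i\in I: f(i)\trianglelefteq g(i)\}\in D$; atomic formulas are evaluated in $N^I/D$ in the same way (an atomic formula holds iff the set of coordinates where it holds is in $D$). For a partial order $\mathscr T$: $\mathfrak t_{\mathscr T}$ is the least infinite cardinal $\kappa$ such that there is a strictly increasing sequence of length $\kappa$ with no upper bound; a $(\kappa_1,\kappa_2)$-pre-cut is a pair $(C_1,C_2)$ of subsets with $C_1\cup C_2$ linearly ordered, every element of $C_1$ below every element of $C_2$, no element $c$ lying above all of $C_1$ and below all of $C_2$, $\mathrm{cf}(C_1)=\kappa_1$ and the cofinality of $C_2$ under the reversed order equal to $\kappa_2$; $\mathfrak p_{\mathscr T}=\min\{\kappa_1+\kappa_2:\kappa_1,\kappa_2\ge\aleph_0,\ \mathscr T$ has a $(\kappa_1,\kappa_2)$-pre-cut$\}$.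 *)

(* Defs.v *)
From mathcomp Require Import ssreflect ssrfun ssrbool eqtype ssrnat seq fintype.
From Stdlib Require List.

Set Implicit Arguments.
Unset Strict Implicit.
Unset Printing Implicit Defensive.

Definition card_le (A B : Type) : Prop := exists f : A -> B, injective f.
Definition card_eq (A B : Type) : Prop := exists f : A -> B, bijective f.
Definition infinite_type (A : Type) : Prop := card_le nat A.

(* A cardinal (von Neumann style): an initial well-order (W, ltW), i.e. a
   strict total well-order each of whose proper initial segments has strictly
   smaller cardinality than W. *)
Definition is_cardinal (W : Type) (ltW : W -> W -> Prop) : Prop :=
  [/\ (forall a, ~ ltW a a),
      (forall a b c, ltW a b -> ltW b c -> ltW a c),
      (forall a b, ltW a b \/ a = b \/ ltW b a),
      well_founded ltW &
      (forall w, ~ card_le W {v : W | ltW v w})].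

Section Orders.
Variables (T : Type) (le : T -> T -> Prop).

Definition slt (x y : T) : Prop := le x y /\ x <> y.

Definition unbounded_incr_seq (W : Type) (ltW : W -> W -> Prop) : Prop :=
  exists s : W -> T,
    (forall a b, ltW a b -> slt (s a) (s b)) /\
    ~ (exists u, forall a, le (s a) u).

Definition cofinal_in (C Dd : T -> Prop) : Prop :=
  (forall x, Dd x -> C x) /\ (forall x, C x -> exists2 y, Dd y & le x y).

Definition cf_is (C : T -> Prop) (W : Type) : Prop :=
  (exists Dd, cofinal_in C Dd /\ card_eq {x : T | Dd x} W) /\
  (forall Dd, cofinal_in C Dd -> card_le W {x : T | Dd x}).

End Orders.

Definition has_precut (T : Type) (le : T -> T -> Prop) (W1 W2 : Type) : Prop :=
  exists C1 C2 : T -> Prop,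
    [/\ (forall x y, (C1 x \/ C2 x) -> (C1 y \/ C2 y) -> le x y \/ le y x),
        (forall x y, C1 x -> C2 y -> slt le x y),
        ~ (exists c, (forall x, C1 x -> slt le x c) /\ (forall y, C2 y -> slt le c y)),
        cf_is le C1 W1 &
        cf_is (fun x y => le y x) C2 W2].

(* |J| < t_T : no infinite cardinal mu <= |J| carries an unbounded strictly
   increasing sequence of length mu (t_T = least such mu, or "infinity"). *)
Definition card_below_t (T : Type) (le : T -> T -> Prop) (J : Type) : Prop :=
  forall (W : Type) (ltW : W -> W -> Prop),
    is_cardinal ltW -> infinite_type W -> card_le W J ->
    ~ unbounded_incr_seq le ltW.

(* |J| < p_T : no (kappa1,kappa2)-pre-cut with kappa1,kappa2 infinite and
   kappa1 + kappa2 <= |J|. *)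
Definition card_below_p (T : Type) (le : T -> T -> Prop) (J : Type) : Prop :=
  forall (W1 : Type) (lt1 : W1 -> W1 -> Prop) (W2 : Type) (lt2 : W2 -> W2 -> Prop),
    is_cardinal lt1 -> is_cardinal lt2 -> infinite_type W1 -> infinite_type W2 ->
    card_le (W1 + W2)%type J -> ~ has_precut le W1 W2.

Definition card_below_min_tp (T : Type) (le : T -> T -> Prop) (J : Type) : Prop :=
  card_below_t le J /\ card_below_p le J.

Definition is_filter (I : Type) (D : (I -> Prop) -> Prop) : Prop :=
  [/\ D (fun _ => True),
      (forall A B : I -> Prop, (forall i, A i -> B i) -> D A -> D B) &
      (forall A B : I -> Prop, D A -> D B -> D (fun i => A i /\ B i))].

Definition init_seg (L : Type) (s t : list L) : Prop := exists u, t = s ++ u.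

Section ReducedTree.
Variables (I : Type) (D : (I -> Prop) -> Prop) (L : Type).

Definition Deq (f g : I -> list L) : Prop := D (fun i => f i = g i).
Definition Dle (f g : I -> list L) : Prop := D (fun i => init_seg (f i) (g i)).

(* elements of ( ^{omega>}L )^I / D : the D-equivalence classes *)
Definition redtree : Type :=
  {P : (I -> list L) -> Prop | exists f, P = Deq f}.

Definition redtree_le (P Q : redtree) : Prop :=
  exists f g, sval P = Deq f /\ sval Q = Deq g /\ Dle f g.

End ReducedTree.

Record vocab := Vocab {
  fun_sym : Type; rel_sym : Type;
  farity : fun_sym -> nat; rarity : rel_sym -> nat }.

Record model (tau : vocab) := Model {
  carrier :> Type;
  finterp : forall f : fun_sym tau, ('I_(farity f) -> carrier) -> carrier;
  rinterp : forall r : rel_sym tau, ('I_(rarity r) -> carrier) -> Prop }.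

Inductive term (tau : vocab) : Type :=
  | tvar : nat -> term tau
  | tapp : forall f : fun_sym tau, ('I_(farity f) -> term tau) -> term tau.

Inductive atomic (tau : vocab) : Type :=
  | aeq : term tau -> term tau -> atomic tau
  | arel : forall r : rel_sym tau, ('I_(rarity r) -> term tau) -> atomic tau.

Fixpoint teval (tau : vocab) (N : model tau) (v : nat -> N) (t : term tau) : N :=
  match t with
  | tvar n => v n
  | tapp f a => finterp (fun i => teval v (a i))
  end.

Definition aholds (tau : vocab) (N : model tau) (v : nat -> N) (phi : atomic tau) : Prop :=
  match phi with
  | aeq t1 t2 => teval v t1 = teval v t2
  | arel r a => rinterp (fun i => teval v (a i))
  end.

(* A formula phi(x, a) with parameters from N^I/D: phi atomic, variable 0 is
   x and variable k+1 is assigned the parameter (a k) : I -> N (a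
   representative of an element of N^I/D). *)
Definition pformula (tau : vocab) (N : model tau) (I : Type) : Type :=
  (atomic tau * (nat -> I -> N))%type.

Definition realizes (tau : vocab) (N : model tau) (I : Type)
    (D : (I -> Prop) -> Prop) (x : I -> N) (p : pformula N I) : Prop :=
  D (fun i => aholds (fun k => match k with 0 => x i | k'.+1 => p.2 k' i end) p.1).

(* Main.v *)
Require Import Defs.
From mathcomp Require Import ssreflect ssrfun ssrbool eqtype ssrnat seq fintype.
From Stdlib Require List.
From mathcomp Require Import choice div.
From mathcomp Require Import boolp.
From mathcomp Require classical_sets wochoice.

Set Implicit Arguments.
Unset Strict Implicit.
Unset Printing Implicit Defensive.


Lemma card_le_refl A : card_le A A.
Proof. by exists id => x y. Qed.

Lemma card_le_trans A B C : card_le A B -> card_le B C -> card_le A C.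
Proof. by move=> [f fi] [g gi]; exists (g \o f) => x y /gi /fi. Qed.

Lemma card_le_eq A B : card_eq A B -> card_le A B.
Proof. by move=> [f fb]; exists f; apply: bij_inj. Qed.

Lemma card_eq_sym A B : card_eq A B -> card_eq B A.
Proof. by move=> [f [g fg gf]]; exists g; exists f. Qed.

Lemma sig_irr (T : Type) (P : T -> Prop) (x y : {x | P x}) : sval x = sval y -> x = y.
Proof.
case: x y => [x px] [y py] /= exy; subst y; congr exist; exact: Prop_irrelevance.
Qed.

Lemma zornP (T : Type) (R : T -> T -> Prop) :
  (forall t, R t t) -> (forall r s t, R r s -> R s t -> R r t) ->
  (forall s t, R s t -> R t s -> s = t) ->
  (forall A : T -> Prop, (forall s t, A s -> A t -> R s t \/ R t s) ->
     exists t, forall s, A s -> R s t) ->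
  exists t, forall s, R t s -> s = t.
Proof.
move=> Rr Rt Ra Rc.
have h1 : forall t, `[< R t t >] by move=> t; apply/asboolP.
have h2 : forall r s t, `[< R r s >] -> `[< R s t >] -> `[< R r t >].
  by move=> r s t /asboolP e1 /asboolP e2; apply/asboolP; apply: Rt e1 e2.
have h3 : forall s t, `[< R s t >] -> `[< R t s >] -> s = t.
  by move=> s t /asboolP e1 /asboolP e2; apply: Ra.
have h4 : forall A : classical_sets.set T,
    classical_sets.total_on A (fun x y => `[< R x y >]) ->
    exists t, forall s, A s -> `[< R s t >].
  move=> A At; have [t Ht] : exists t, forall s, A s -> R s t.
    by apply: Rc => s t As At'; case: (At s t As At') => /asboolP h; [left|right].
  by exists t => s As; apply/asboolP; apply: Ht.
have [t Ht] := @classical_sets.Zorn T (fun x y => `[< R x y >]) h1 h2 h3 h4.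
by exists t => s /asboolP /Ht.
Qed.

Lemma card_cmp A B : card_le A B \/ card_le B A.
Proof.
pose PI (R : A -> B -> Prop) := (forall a b b', R a b -> R a b' -> b = b') /\
                               (forall a a' b, R a b -> R a' b -> a = a').
pose T := {R | PI R}.
pose Rl (x y : T) := forall a b, sval x a b -> sval y a b.
have [m mmax] : exists t, forall s, Rl t s -> s = t.
  apply: zornP.
  - by move=> t a b.
  - by move=> r s t h1 h2 a b /h1 /h2.
  - move=> s t h1 h2; apply: sig_irr; apply/funext => a; apply/funext => b.
    by apply/propext; split; [apply: h1 | apply: h2].
  - move=> C Cc.
    pose U a b := exists2 x : T, C x & sval x a b.
    have PU : PI U.
      split.
      + move=> a b b' [x Cx xab] [y Cy yab].
        case: (Cc x y Cx Cy) => h.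
        * by case: (svalP y) => f _; apply: f (h _ _ xab) yab.
        * by case: (svalP x) => f _; apply: f xab (h _ _ yab).
      + move=> a a' b [x Cx xab] [y Cy yab].
        case: (Cc x y Cx Cy) => h.
        * by case: (svalP y) => _ f; apply: f (h _ _ xab) yab.
        * by case: (svalP x) => _ f; apply: f xab (h _ _ yab).
    by exists (exist _ U PU) => s Cs a b sab; exists s.
case: (EM (forall a, exists b, sval m a b)) => [Htot|].
  left; exists (fun a => proj1_sig (cid (Htot a))) => a a' e.
  case: (cid (Htot a)) e => b hb; case: (cid (Htot a')) => b' hb' /= e; subst b'.
  by case: (svalP m) => _ f; apply: f hb hb'.
move=> /existsNP [a0 Ha0].
case: (EM (forall b, exists a, sval m a b)) => [Htot|].
  right; exists (fun b => proj1_sig (cid (Htot b))) => b b' e.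
  case: (cid (Htot b)) e => a ha; case: (cid (Htot b')) => a' ha' /= e; subst a'.
  by case: (svalP m) => f _; apply: f ha ha'.
move=> /existsNP [b0 Hb0]; exfalso.
pose R' a b := sval m a b \/ (a = a0 /\ b = b0).
have PR' : PI R'.
  case: (svalP m) => f g; split.
  + move=> a b b' [h|[-> ->]] [h'|[e ->]] //.
    * exact: f h h'.
    * by subst a; case: Ha0; exists b.
    * by case: Ha0; exists b'.
  + move=> a a' b [h|[-> ->]] [h'|[-> e]] //.
    * exact: g h h'.
    * by subst b; case: Hb0; exists a.
    * by case: Hb0; exists a'.
have := mmax (exist _ R' PR') (fun a b h => or_introl h).
move=> e; have : R' a0 b0 by right.
by rewrite -[R']/(sval (exist _ R' PR')) e => h; apply: Ha0; exists b0.
Qed.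

Definition all_in (X : Type) (P : X -> Prop) (l : list X) := forall x, List.In x l -> P x.

Arguments all_in : simpl never.

Lemma all_in_nil X (P : X -> Prop) : all_in P [::].
Proof. by []. Qed.

Lemma all_in_cons X (P : X -> Prop) x l : all_in P (x :: l) <-> P x /\ all_in P l.
Proof.
split; first by move=> h; split; [apply: h; left | move=> y hy; apply: h; right].
by case=> hx hl y /= [<-|/hl].
Qed.

Lemma map_inj_in X Y (f : X -> Y) (P : X -> Prop) (l l' : list X) :
  (forall x y, P x -> P y -> f x = f y -> x = y) ->
  all_in P l -> all_in P l' -> map f l = map f l' -> l = l'.
Proof.
move=> fi; elim: l l' => [|x l IH] [|y l'] //= Pl Pl' [exy el].
move/all_in_cons: Pl => [Px Pl]; move/all_in_cons: Pl' => [Py Pl'].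
by rewrite (fi x y Px Py exy) (IH l' Pl Pl' el).
Qed.

Lemma all_in_map X Y (f : X -> Y) (P : X -> Prop) (Q : Y -> Prop) l :
  (forall x, P x -> Q (f x)) -> all_in P l -> all_in Q (map f l).
Proof.
move=> h; elim: l => [|x l IH]; first by move=> _ y [].
move=> H; move/all_in_cons: H => [Px Pl].
rewrite /=; apply/(all_in_cons Q (f x) (map f l)); split; [exact: h | exact: IH].
Qed.

Lemma list_inj (A : Type) : card_le nat A -> card_le (list A) A.
Proof.
move=> [iota iotai].
pose B0 a := exists n, a = iota n.
pose inv (a : A) : nat :=
  match pselect (exists n, a = iota n) with
  | left h => proj1_sig (cid h) | right _ => 0 end.
have invK : forall a, B0 a -> iota (inv a) = a.
  move=> a h; rewrite /inv; case: pselect => [h'|//].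
  by case: (cid h') => n /= ->.
pose F0 l a := all_in B0 l /\ a = iota (pickle (map inv l)).
pose Good (p : (A -> Prop) * (list A -> A -> Prop)) :=
  (forall a, B0 a -> p.1 a) /\ (forall l a, F0 l a -> p.2 l a) /\
      (forall l, all_in p.1 l -> exists a, p.2 l a) /\
      (forall l a, p.2 l a -> all_in p.1 l /\ p.1 a) /\
      (forall l a a', p.2 l a -> p.2 l a' -> a = a') /\
      (forall l l' a, p.2 l a -> p.2 l' a -> l = l').
pose T := {p | Good p}.
pose Rl (x y : T) := (forall a, (sval x).1 a -> (sval y).1 a) /\
                     (forall l a, (sval x).2 l a -> (sval y).2 l a).
have F0inj : forall l l' a, F0 l a -> F0 l' a -> l = l'.
  move=> l l' a [h1 ->] [h2 /iotai /(pcan_inj pickleK) e].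
  have := congr1 (map iota) e; rewrite -!map_comp.
  have mK : forall l, all_in B0 l -> map (iota \o inv) l = l.
    elim=> [|x k IH] //= /all_in_cons [bx bk]; by rewrite /= invK // IH.
  by rewrite !mK.
have [m mmax] : exists t, forall s, Rl t s -> s = t.
  apply: zornP.
  - by move=> t; split.
  - by move=> r s t [h1 h2] [h3 h4]; split=> [a /h1/h3|l a /h2/h4].
  - move=> s t [h1 h2] [h3 h4]; apply: sig_irr.
    case: (sval s) h1 h2 h3 h4 => [B F]; case: (sval t) => [B' F'] /= h1 h2 h3 h4.
    congr pair.
      by apply/funext => a; apply/propext; split; [apply: h1|apply: h3].
    apply/funext => l; apply/funext => a; apply/propext; split; [apply: h2|apply: h4].
  - move=> C Cc.
    pose U1 a := B0 a \/ exists2 x : T, C x & (sval x).1 a.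
    pose U2 l a := F0 l a \/ exists2 x : T, C x & (sval x).2 l a.
    have key : forall l, all_in U1 l -> all_in B0 l \/ exists2 x : T, C x & all_in (sval x).1 l.
      elim=> [|y l IH]; first by left.
      move/all_in_cons => [[hy|[x Cx hy]] /IH [hl|[x' Cx' hl]]].
      + by left; apply/all_in_cons.
      + right; exists x' => //; apply/all_in_cons; split=> //.
        by case: (svalP x') => [h [_ [_ [_ [_ _]]]]]; apply: h.
      + right; exists x => //; apply/all_in_cons; split=> // z /hl.
        by case: (svalP x) => [h [_ [_ [_ [_ _]]]]]; apply: h.
      + case: (Cc x x' Cx Cx') => [[h _]|[h _]].
        * by right; exists x' => //; apply/all_in_cons; split; [apply: h|].
        * by right; exists x => //; apply/all_in_cons; split=> // z /hl /h.
    have lift : forall (x : T) l a, F0 l a -> (sval x).2 l a.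
      by move=> x l a h; case: (svalP x) => [_ [h2 [_ [_ [_ _]]]]]; apply: h2.
    have GU : Good (U1, U2).
      split=> /=; [|split; [|split; [|split; [|split]]]].
      + by move=> a h; left.
      + by move=> l a h; left.
      + move=> l /key [h|[x Cx h]].
          by exists (iota (pickle (map inv l))); left.
        by case: (svalP x) => [_ [_ [h3 [_ [_ _]]]]]; case: (h3 l h) => a ha; exists a; right; exists x.
      + move=> l a [[h ->]|[x Cx h]].
          split; last by left; exists (pickle (map inv l)).
          by move=> z /h hz; left.
        case: (svalP x) => [_ [_ [_ [h4 [_ _]]]]]; case: (h4 l a h) => hl ha.
        by split; [move=> z /hl hz; right; exists x | right; exists x].
      + move=> l a a' [h|[x Cx h]] [h'|[y Cy h']].
        * by case: h h' => _ -> [_ ->].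
        * by case: (svalP y) => [_ [_ [_ [_ [f _]]]]]; apply: f (lift y _ _ h) h'.
        * by case: (svalP x) => [_ [_ [_ [_ [f _]]]]]; apply: f h (lift x _ _ h').
        * case: (Cc x y Cx Cy) => [[_ e]|[_ e]].
          - by case: (svalP y) => [_ [_ [_ [_ [f _]]]]]; apply: f (e _ _ h) h'.
          - by case: (svalP x) => [_ [_ [_ [_ [f _]]]]]; apply: f h (e _ _ h').
      + move=> l l' a [h|[x Cx h]] [h'|[y Cy h']].
        * exact: F0inj h h'.
        * by case: (svalP y) => [_ [_ [_ [_ [_ f]]]]]; apply: f (lift y _ _ h) h'.
        * by case: (svalP x) => [_ [_ [_ [_ [_ f]]]]]; apply: f h (lift x _ _ h').
        * case: (Cc x y Cx Cy) => [[_ e]|[_ e]].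
          - by case: (svalP y) => [_ [_ [_ [_ [_ f]]]]]; apply: f (e _ _ h) h'.
          - by case: (svalP x) => [_ [_ [_ [_ [_ f]]]]]; apply: f h (e _ _ h').
    exists (exist _ (U1, U2) GU) => s Cs; split=> /=.
      by move=> a h; right; exists s.
    by move=> l a h; right; exists s.
case: m mmax => [[B F] GBF] mmax.
case: (GBF) => /= [B0B [F0F [Ftot [Fran [Ffun Finj]]]]].
pose Fc (l : list A) : A :=
  match pselect (exists a, F l a) with
  | left h => proj1_sig (cid h) | right _ => iota 0 end.
have FcP : forall l, all_in B l -> F l (Fc l).
  move=> l hl; rewrite /Fc; case: pselect => [h|[]]; last exact: Ftot.
  by case: (cid h).
have FcB : forall l, all_in B l -> B (Fc l).
  by move=> l /FcP /Fran [].
have Fci : forall l l', all_in B l -> all_in B l' -> Fc l = Fc l' -> l = l'.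
  move=> l l' hl hl' e; have h1 := FcP l hl; have h2 := FcP l' hl'.
  rewrite -e in h2; exact: (Finj _ _ _ h1 h2).
have B0n : B (iota 0) by apply: B0B; exists 0.
case: (card_cmp {x | B x} {x | ~ B x}) => [[e ei]|[e ei]].
- (* B embeds in its complement: extend *)
  exfalso.
  pose einv (x : A) : A :=
    match pselect (exists b, x = sval (e b)) with
    | left h => sval (proj1_sig (cid h)) | right _ => x end.
  have einvE : forall b, einv (sval (e b)) = sval b.
    move=> b; rewrite /einv; case: pselect => [h|[]]; last by exists b.
    by case: (cid h) => b' /= /sig_irr /ei ->.
  pose B' a := B a \/ exists b, a = sval (e b).
  pose sg (x : A) : list A :=
    if pselect (B x) then [:: x] else [:: einv x; einv x].
  have sgB : forall x, B' x -> all_in B (sg x).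
    move=> x hx; rewrite /sg; case: pselect => [bx|nbx].
      by apply/all_in_cons; split.
    case: hx => [//|[b eb]]; have -> : einv x = sval b by rewrite eb einvE.
    apply/all_in_cons; split; [exact: svalP|apply/all_in_cons; split]; [exact: svalP|by []].
  have sginj : forall x y, B' x -> B' y -> sg x = sg y -> x = y.
    move=> x y hx hy; rewrite /sg; case: pselect => [bx|nbx]; case: pselect => [bY|nbY] //=.
      by case.
    case: hx => [//|[b eb]]; case: hy => [//|[b' eb']].
    by case; rewrite eb eb' !einvE => /sig_irr ->.
  pose Hc x := Fc (sg x).
  have HcB : forall x, B' x -> B (Hc x) by move=> x /sgB /FcB.
  have Hci : forall x y, B' x -> B' y -> Hc x = Hc y -> x = y.
    by move=> x y hx hy /(Fci _ _ (sgB _ hx) (sgB _ hy)); apply: sginj.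
  pose H l := Fc (map Hc l).
  have HB : forall l, all_in B' l -> B (H l).
    by move=> l hl; apply: FcB; apply: all_in_map hl.
  have Hinj : forall l l', all_in B' l -> all_in B' l' -> H l = H l' -> l = l'.
    move=> l l' hl hl' /(Fci _ _ (all_in_map HcB hl) (all_in_map HcB hl')).
    exact: map_inj_in Hci hl hl'.
  pose F' l a := F l a \/ (all_in B' l /\ ~ all_in B l /\
                    exists h : B (H l), a = sval (e (exist _ (H l) h))).
  have G' : Good (B', F').
    split=> /=; [|split; [|split; [|split; [|split]]]].
    + by move=> a /B0B; left.
    + by move=> l a /F0F; left.
    + move=> l hl; case: (EM (all_in B l)) => [hB|hnB].
        by case: (Ftot l hB) => a ha; exists a; left.
      by exists (sval (e (exist _ (H l) (HB l hl)))); right; split=> //; split=> //; exists (HB l hl).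
    + move=> l a [h|[hl [_ [hb ->]]]].
        by case: (Fran l a h) => hl ha; split; [move=> z /hl; left|left].
      by split=> //; right; exists (exist _ (H l) hb).
    + move=> l a a' [h|[hl [hn [hb ->]]]] [h'|[hl' [hn' [hb' ->]]]].
      * exact: Ffun h h'.
      * by case: hn'; case: (Fran l a h).
      * by case: hn; case: (Fran l a' h').
      * by rewrite (Prop_irrelevance hb hb').
    + move=> l l' a [h|[hl [hn [hb ->]]]] [h'|[hl' [hn' [hb' e']]]].
      * exact: Finj h h'.
      * by case: (Fran l a h) => _ ha; move: (svalP (e (exist _ (H l') hb'))); rewrite -e'.
      * by case: (Fran l' _ h') => _ ha; move: (svalP (e (exist _ (H l) hb))).
      * by move/sig_irr/ei/(congr1 sval): e' => /= /Hinj; apply.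
  have eq' : exist _ (B', F') G' = exist _ (B, F) GBF.
    by apply: mmax; split=> /= [a ha|l a ha]; left.
  move: eq' => /(congr1 (fun s => (sval s).1)) /= eB.
  have : B' (sval (e (exist _ (iota 0) B0n))) by right; exists (exist _ (iota 0) B0n).
  by rewrite eB; apply: (svalP (e _)).
-
  pose sg (x : A) : list A :=
    match pselect (B x) with
    | left _ => [:: x]
    | right h => [:: sval (e (exist _ x h)); sval (e (exist _ x h))] end.
  have sgB : forall x, all_in B (sg x).
    move=> x; rewrite /sg; case: pselect => [bx|nbx] /=.
      by apply/all_in_cons; split.
    apply/all_in_cons; split; [exact: svalP|apply/all_in_cons; split]; [exact: svalP|by []].
  have sginj : forall x y, sg x = sg y -> x = y.
    move=> x y; rewrite /sg; case: pselect => [bx|nbx]; case: pselect => [bY|nbY] //=.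
      by case.
    by case=> /sig_irr /ei [].
  pose Hc x := Fc (sg x).
  have Hci : forall x y, Hc x = Hc y -> x = y.
    by move=> x y /(Fci _ _ (sgB x) (sgB y)); apply: sginj.
  exists (fun l => Fc (map Hc l)) => l l' /(Fci _ _ _ _).
  have hB : forall l, all_in B (map Hc l).
    by move=> k; apply: (@all_in_map _ _ _ (fun _ => True)) => // x _; apply: FcB.
  move=> /(_ (hB l) (hB l')) /(map_inj_in (P := fun _ => True)); apply=> //.
  by move=> x y _ _; apply: Hci.
Qed.

Lemma inf_sum A : card_le nat A -> card_le (A + A) A.
Proof.
move=> h; apply: card_le_trans (list_inj h).
exists (fun x => match x with inl a => [:: a] | inr a => [:: a; a] end).
by move=> [a|a] [b|b] //= [->].
Qed.

Lemma inf_prod A : card_le nat A -> card_le (A * A) A.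
Proof.
move=> h; apply: card_le_trans (list_inj h).
by exists (fun x => [:: x.1; x.2]) => [[a b] [c d]] /= [-> ->].
Qed.

Lemma card_le_sum X Y A : card_le nat A -> card_le X A -> card_le Y A ->
  card_le (X + Y) A.
Proof.
move=> h [f fi] [g gi]; apply: card_le_trans (inf_sum h).
exists (fun z => match z with inl x => inl (f x) | inr y => inr (g y) end).
by move=> [x|x] [y|y] //= [] => [/fi ->|/gi ->].
Qed.

Lemma card_le_list X A : card_le nat A -> card_le X A -> card_le (list X) A.
Proof.
move=> h [f fi]; apply: card_le_trans (list_inj h).
by exists (map f); apply: inj_map.
Qed.

Lemma fin_or_inf A : (exists l : list A, forall x, List.In x l) \/ card_le nat A.
Proof.
case: (EM (exists l : list A, forall x, List.In x l)) => h; first by left.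
right.
have nx : forall l : list A, exists x, ~ List.In x l.
  move=> l; apply/existsNP => H; apply: h; exists l => x.
  by case: (EM (List.In x l)) => // /H.
pose g l := proj1_sig (cid (nx l)).
have gP : forall l, ~ List.In (g l) l by move=> l; rewrite /g; case: (cid _).
pose fix Ls n := if n is n'.+1 then g (Ls n') :: Ls n' else [::].
exists (fun n => g (Ls n)) => m n.
have sub : forall m n, m < n -> List.In (g (Ls m)) (Ls n).
  move=> i j; elim: j => // j IH; rewrite ltnS leq_eqVlt => /orP [/eqP ->|/IH h'].
    by left.
  by right.
move=> e; case: (ltngtP m n) => // hmn.
  by have := sub _ _ hmn; rewrite e => /gP.
by have := sub _ _ hmn; rewrite -e => /gP.
Qed.

Lemma NNPP (P : Prop) : ~ ~ P -> P.
Proof. by case: (EM P) => // h /(_ h). Qed.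


Section WO.
Variables (T : Type) (le : T -> T -> Prop).
Hypotheses (lerefl : forall x, le x x)
  (letrans : forall x y z, le x y -> le y z -> le x z)
  (leanti : forall x y, le x y -> le y x -> x = y).

Definition wellord (S : T -> Prop) :=
  forall A : T -> Prop, (forall x, A x -> S x) -> (exists x, A x) ->
    exists m, A m /\ forall a, A a -> le m a.

Variable S : T -> Prop.
Hypothesis Swo : wellord S.

Lemma wo_chain x y : S x -> S y -> le x y \/ le y x.
Proof.
move=> Sx Sy.
have [m [Am Hm]] : exists m, (m = x \/ m = y) /\ forall a, (a = x \/ a = y) -> le m a.
  by apply: Swo; [move=> z [->|->] | exists x; left].
by case: Am => e; subst m; [left|right]; apply: Hm; [right|left].
Qed.

Lemma slt_trans x y z : slt le x y -> slt le y z -> slt le x z.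
Proof.
move=> [h1 n1] [h2 n2]; split; first exact: letrans h1 h2.
by move=> e; subst z; apply: n1; apply: leanti h1 h2.
Qed.

Lemma slt_le_trans x y z : slt le x y -> le y z -> slt le x z.
Proof.
move=> [h1 n1] h2; split; first exact: letrans h1 h2.
by move=> e; subst z; apply: n1; apply: leanti h1 h2.
Qed.

Lemma le_slt_trans x y z : le x y -> slt le y z -> slt le x z.
Proof.
move=> h1 [h2 n2]; split; first exact: letrans h1 h2.
by move=> e; subst z; apply: n2; apply: leanti h2 h1.
Qed.

Lemma chain_tri x y : S x -> S y -> slt le x y \/ x = y \/ slt le y x.
Proof.
move=> Sx Sy; case: (EM (x = y)) => [->|nxy]; first by right; left.
by case: (wo_chain Sx Sy) => h; [left|right; right]; split=> // e; apply: nxy.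
Qed.

Lemma not_slt x y : S x -> S y -> ~ slt le x y -> le y x.
Proof.
move=> Sx Sy nh; case: (chain_tri Sx Sy) => [//|[->|[]//]]; exact: lerefl.
Qed.

Definition minof (P : T -> Prop) (d : T) : T :=
  match pselect (exists m, P m /\ forall a, P a -> le m a) with
  | left h => proj1_sig (cid h) | right _ => d end.

Lemma minofP P d : (exists m, P m /\ forall a, P a -> le m a) ->
  P (minof P d) /\ forall a, P a -> le (minof P d) a.
Proof. by move=> h; rewrite /minof; case: pselect => [h'|//]; case: (cid h'). Qed.

Definition rS x y := S x /\ S y /\ slt le x y.

Lemma rS_wf : well_founded rS.
Proof.
move=> z; apply: NNPP => nz.
have [m [[Sm nm] Hm]] : exists m, (S m /\ ~ Acc rS m) /\
    forall a, S a /\ ~ Acc rS a -> le m a.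
  apply: Swo; first by move=> x [].
  exists z; split=> //; case: (EM (S z)) => // nS; exfalso; apply: nz.
  by constructor => y [_ [? _]].
apply: nm; constructor => y [Sy [_ ym]]; apply: NNPP => ny.
have := Hm y (conj Sy ny); case: ym => h1 h2 h3; apply: h2; exact: leanti.
Qed.

Definition seg (y : option T) x :=
  S x /\ (match y with Some y' => slt le x y' | None => True end).

Lemma rank_lemma (A : T -> Prop) (y0 : option T) :
  (forall x, A x -> S x) ->
  (forall y, seg y0 y -> ~ card_le {x | A x} {x | seg (Some y) x}) ->
  card_le {x | seg y0 x} {x | A x}.
Proof.
move=> AS Hy.
pose body (c : T) (rec : forall c', rS c' c -> T) :=
  minof (fun a => A a /\ forall c' (h : rS c' c), slt le (rec c' h) a) c.
pose F := Fix rS_wf (fun _ => T) body.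
have Fe : forall c, F c = minof (fun a => A a /\ forall c', rS c' c -> slt le (F c') a) c.
  move=> c; rewrite /F Fix_eq /body //.
  move=> x f g E; congr minof; apply/funext => a; apply/propext.
  by split=> [[Aa H]|[Aa H]]; split=> // c' h; [rewrite -E|rewrite E]; apply: H.
pose Sc c a := A a /\ forall c', rS c' c -> slt le (F c') a.
have Inv : forall c, seg y0 c -> Sc c (F c) /\ forall a, Sc c a -> le (F c) a.
  elim/(well_founded_ind rS_wf) => c IH Sgc.
  have IH' : forall c', rS c' c -> Sc c' (F c') /\ forall a, Sc c' a -> le (F c') a.
    move=> c' rc; apply: IH => //; case: rc => Sc' [Sc0 lt']; split=> //.
    case: Sgc; case: y0 {Hy} => [y|] //= _ h; exact: slt_trans lt' h.
  have ne : exists a, Sc c a.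
    apply: NNPP => nE; apply: (Hy c Sgc).
    have Q : forall a, A a -> exists c', rS c' c /\ le a (F c').
      move=> a Aa; apply: NNPP => nq; apply: nE; exists a; split=> // c' rc.
      apply: NNPP => ns; apply: nq; exists c'; split=> //.
      have [[Ac' _] _] := IH' c' rc.
      exact: not_slt (AS _ Ac') (AS _ Aa) ns.
    have hm : forall a, A a -> exists m, (rS m c /\ le a (F m)) /\
                 forall c', rS c' c /\ le a (F c') -> le m c'.
      move=> a Aa; apply: Swo; first by move=> x [[]].
      exact: Q.
    pose h (a : {x | A x}) := proj1_sig (cid (hm _ (svalP a))).
    have hP : forall a, (rS (h a) c /\ le (sval a) (F (h a))) /\
                 forall c', rS c' c /\ le (sval a) (F c') -> le (h a) c'.
      by move=> a; rewrite /h; case: (cid _).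
    have hE : forall a, sval a = F (h a).
      move=> a; have [[rc la] hmin] := hP a.
      have [_ Hmin] := IH' _ rc; apply: leanti => //; apply: Hmin; split; first exact: svalP.
      move=> c'' rc''; apply: NNPP => ns.
      have Sa := AS _ (svalP a).
      have [[Ac'' _] _] := IH' c'' (conj (proj1 rc'') (conj (proj1 (proj2 rc))
         (slt_trans (proj2 (proj2 rc'')) (proj2 (proj2 rc))))).
      have := hmin c'' (conj (conj (proj1 rc'') (conj (proj1 (proj2 rc))
         (slt_trans (proj2 (proj2 rc'')) (proj2 (proj2 rc))))) (not_slt (AS _ Ac'') Sa ns)).
      by case: rc'' => _ [_ [l1 n1]] l2; apply: n1; apply: leanti.
    have hS : forall a, seg (Some c) (h a).
      by move=> a; have [[[Sh [_ lt]] _] _] := hP a; split.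
    exists (fun a => exist _ (h a) (hS a)) => a b /(congr1 sval) /= e.
    by apply: sig_irr; rewrite hE e -hE.
  have ex : exists m, Sc c m /\ forall a, Sc c a -> le m a.
    by apply: Swo => //; move=> x [/AS].
  by rewrite Fe; apply: minofP.
exists (fun c => exist _ (F (sval c)) (proj1 (proj1 (Inv _ (svalP c))))).
move=> [c hc] [d hd] /(congr1 sval) /= e; apply: sig_irr => /=.
have Sc0 := proj1 hc; have Sd := proj1 hd.
case: (chain_tri Sc0 Sd) => [lt|[//|lt]].
- have [[_ H] _] := Inv _ hd; have [_ n] := H c (conj Sc0 (conj Sd lt)).
  by rewrite e in n.
- have [[_ H] _] := Inv _ hc; have [_ n] := H d (conj Sd (conj Sc0 lt)).
  by rewrite e in n.
Qed.

Definition cofin (X : T -> Prop) :=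
  (forall x, X x -> S x) /\ (forall s, S s -> exists x, X x /\ le s x).

Lemma wf_sub (P : T -> Prop) : (forall x, P x -> S x) ->
  well_founded (fun a b : {x | P x} => slt le (sval a) (sval b)).
Proof.
move=> PS z; apply: NNPP => nz.
have [m [[hm nm] Hm]] : exists m, (exists h : P m, ~ Acc (fun a b : {x | P x} =>
      slt le (sval a) (sval b)) (exist _ m h)) /\
    forall a, (exists h : P a, ~ Acc (fun a b : {x | P x} =>
      slt le (sval a) (sval b)) (exist _ a h)) -> le m a.
  apply: Swo; first by move=> x [h _]; apply: PS.
  by case: z nz => z' pz nz; exists z', pz.
apply: nm; constructor => y ym; apply: NNPP => ny.
have lm : le m (sval y).
  by case: y ym ny => y' py ym ny /=; apply: Hm; exists py.
by case: ym => h1 h2; apply: h2; apply: leanti h1 lm.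
Qed.

Lemma cof_lemma : (exists s, S s) -> (forall x, S x -> exists y, S y /\ slt le x y) ->
  exists Z : T -> Prop,
  [/\ cofin Z,
     (forall z, Z z -> ~ card_le {x | Z x} {x | Z x /\ slt le x z}),
     (forall Dd, cofin Dd -> card_le {x | Z x} {x | Dd x}) &
     card_le nat {x | Z x}].
Proof.
move=> [s0 Ss0] nomax.
pose Good (y : option T) := exists X, cofin X /\ card_le {x | X x} {x | seg y x}.
have GN : Good None.
  exists S; split; first by split=> // s Ss; exists s; split=> //; apply: lerefl.
  by exists (fun x => exist _ (sval x) (conj (svalP x) I)) => a b /(congr1 sval) /= /sig_irr.
have [y0 [Gy0 miny0]] : exists y0, Good y0 /\ forall y, seg y0 y -> ~ Good (Some y).
  case: (EM (exists y, S y /\ Good (Some y))) => [ex|nex].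
    have [m [[Sm Gm] Hm]] : exists m, (S m /\ Good (Some m)) /\
        forall a, S a /\ Good (Some a) -> le m a.
      by apply: Swo => // x [].
    exists (Some m); split=> // y [Sy [ly ny]] Gy; apply: ny; apply: leanti => //.
    exact: Hm.
  exists None; split=> // y [Sy _] Gy; apply: nex; by exists y.
have miny0' : forall y, seg y0 y -> forall X, cofin X -> ~ card_le {x | X x} {x | seg (Some y) x}.
  by move=> y hy X cX hc; apply: (miny0 y hy); exists X.
case: Gy0 => X0 [[X0S X0c] [g gi]].
pose gT (x : T) : T :=
  match pselect (X0 x) with left h => sval (g (exist _ x h)) | right _ => x end.
have gTP : forall x, X0 x -> seg y0 (gT x).
  by move=> x hx; rewrite /gT; case: pselect => // h; apply: svalP.
have gTi : forall x x', X0 x -> X0 x' -> gT x = gT x' -> x = x'.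
  move=> x x' hx hx'; rewrite /gT; case: pselect => // h; case: pselect => // h'.
  by move=> /sig_irr /gi /(congr1 sval).
have gTS : forall x, X0 x -> S (gT x) by move=> x /gTP [].
pose Z x := X0 x /\ forall x', X0 x' -> slt le (gT x') (gT x) -> slt le x' x.
have ZS : forall x, Z x -> S x by move=> x [/X0S].
have G1 : forall s, S s -> exists x, Z x /\ le s x.
  move=> s Ss.
  have [m [[x1 [[hx1 lx1] ->]] Hm]] : exists m, (exists x, (X0 x /\ le s x) /\ m = gT x) /\
      forall a, (exists x, (X0 x /\ le s x) /\ a = gT x) -> le m a.
    apply: Swo; first by move=> a [x [[hx _] ->]]; apply: gTS.
    by have [x [hx lx]] := X0c s Ss; exists (gT x), x.
  exists x1; split=> //; split=> // x' hx' lt'.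
  case: (EM (le s x')) => [lsx|nlsx].
    have := Hm (gT x') (ex_intro _ x' (conj (conj hx' lsx) erefl)).
    by case: lt' => l1 n1 l2; case: n1; apply: leanti.
  have lxs : slt le x' s.
    case: (wo_chain (X0S _ hx') Ss) => h; last by case: nlsx.
    by split=> // e; subst x'; apply: nlsx; apply: lerefl.
  exact: slt_le_trans lxs lx1.
have Zc : cofin Z by split.
have hk : forall z w, Z z -> Z w -> slt le w z -> slt le (gT w) (gT z).
  move=> z w Zz Zw lw.
  case: (chain_tri (gTS _ (proj1 Zw)) (gTS _ (proj1 Zz))) => [//|[e|lt]].
    by exfalso; case: lw => _; apply; apply: gTi e; [case: Zw|case: Zz].
  have := proj2 Zw z (proj1 Zz) lt; case: lw => l1 n1 [l2 n2].
  by case: n1; apply: leanti.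
exists Z; split=> //.
- move=> z Zz [h hi].
  have kP : forall u, seg (Some (gT z)) (gT (sval (h u))).
    move=> u; have [Zw lw] := svalP (h u); split; first exact: gTS (proj1 Zw).
    exact: hk.
  apply: (miny0' (gT z) (gTP _ (proj1 Zz)) Z Zc).
  exists (fun u => exist _ _ (kP u)) => u u' /(congr1 sval) /= e.
  apply: hi; apply: sig_irr; apply: gTi e.
    exact: proj1 (proj1 (svalP (h u))).
  exact: proj1 (proj1 (svalP (h u'))).
- move=> Dd cD; case: (cD) => DS _.
  have := rank_lemma DS (fun y hy => miny0' y hy Dd cD).
  apply: card_le_trans; apply: card_le_trans (ex_intro _ g gi).
  by exists (fun u => exist _ (sval u) (proj1 (svalP u))) => a b /(congr1 sval) /= /sig_irr.
- have nxt : forall z, Z z -> exists z', Z z' /\ slt le z z'.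
    move=> z Zz; have [y [Sy lzy]] := nomax _ (ZS _ Zz).
    have [z' [Zz' lyz]] := G1 _ Sy; exists z'; split=> //.
    exact: slt_le_trans lzy lyz.
  have [z0 [Zz0 _]] := G1 _ Ss0.
  pose nx (u : {x | Z x}) : {x | Z x} :=
    let p := cid (nxt (sval u) (svalP u)) in exist _ (sval p) (proj1 (svalP p)).
  have nxlt : forall u, slt le (sval u) (sval (nx u)).
    by move=> u; rewrite /nx; case: (cid _) => p [].
  pose sq n := iter n nx (exist _ z0 Zz0).
  have inc : forall m n, m < n -> slt le (sval (sq m)) (sval (sq n)).
    move=> m; elim=> // n IH; rewrite ltnS leq_eqVlt => /orP [/eqP ->|/IH h].
      exact: nxlt.
    exact: slt_trans h (nxlt _).
  exists sq => m n e; case: (ltngtP m n) => // h.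
    by have := inc _ _ h; rewrite e => [[_]].
  by have := inc _ _ h; rewrite e => [[_]].
Qed.

End WO.


Section Apply.
Variables (T : Type) (le : T -> T -> Prop).
Hypotheses (lerefl : forall x, le x x)
  (letrans : forall x y z, le x y -> le y z -> le x z)
  (leanti : forall x y, le x y -> le y x -> x = y).

Lemma cof_card (S Z : T -> Prop) : wellord le S -> (forall x, Z x -> S x) ->
  (forall z, Z z -> ~ card_le {x | Z x} {x | Z x /\ slt le x z}) ->
  is_cardinal (fun a b : {x | Z x} => slt le (sval a) (sval b)).
Proof.
move=> Swo ZS G2; split.
- by move=> a [_].
- by move=> a b c; apply: slt_trans.
- move=> a b; case: (chain_tri Swo (ZS _ (svalP a)) (ZS _ (svalP b))).
    by left.
  by case=> [/sig_irr ->|h]; [right; left|right; right].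
- exact: (@wf_sub T le leanti S Swo Z ZS).
- move=> w h; apply: (G2 _ (svalP w)); apply: card_le_trans h _.
  exists (fun v : {v : {x | Z x} | slt le (sval v) (sval w)} =>
    exist (fun x => Z x /\ slt le x (sval w)) (sval (sval v)) (conj (svalP (sval v)) (svalP v))).
  by move=> u v /(congr1 sval) /= /sig_irr /sig_irr.
Qed.

End Apply.

Section Apply2.
Variables (T : Type) (le : T -> T -> Prop).
Hypotheses (lerefl : forall x, le x x)
  (letrans : forall x y z, le x y -> le y z -> le x z)
  (leanti : forall x y, le x y -> le y x -> x = y).

Lemma t_apply (J : Type) (S : T -> Prop) : card_below_t le J ->
  wellord le S -> (exists s, S s) -> (forall x, S x -> exists y, S y /\ slt le x y) ->
  card_le {x | S x} J -> exists u, forall s, S s -> le s u.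
Proof.
move=> ht Swo ne nomax SJ.
have [Z [[ZS Zc] G2 G3 G4]] := cof_lemma lerefl letrans leanti Swo ne nomax.
apply: NNPP => nb.
apply: (ht {x | Z x} (fun a b => slt le (sval a) (sval b))).
- exact: (@cof_card T le letrans leanti S Z Swo ZS G2).
- exact: G4.
- apply: card_le_trans SJ.
  by exists (fun z => exist _ (sval z) (ZS _ (svalP z))) => a b /(congr1 sval) /= /sig_irr.
exists sval; split=> // [[u hu]]; apply: nb; exists u => s Ss.
have [z [Zz lsz]] := Zc s Ss; exact: letrans lsz (hu (exist _ z Zz)).
Qed.

Lemma p_apply (J : Type) (S1 S2 : T -> Prop) : card_below_p le J ->
  wellord le S1 -> (exists s, S1 s) -> (forall x, S1 x -> exists y, S1 y /\ slt le x y) ->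
  card_le {x | S1 x} J ->
  wellord (fun x y => le y x) S2 -> (exists s, S2 s) ->
  (forall x, S2 x -> exists y, S2 y /\ slt (fun x y => le y x) x y) ->
  card_le {x | S2 x} J ->
  (forall a b, S1 a -> S2 b -> le a b) ->
  exists c, (forall a, S1 a -> le a c) /\ (forall b, S2 b -> le c b).
Proof.
move=> hp Swo1 ne1 nm1 SJ1 Swo2 ne2 nm2 SJ2 cross.
have [Z1 [[ZS1 Zc1] G21 G31 G41]] := cof_lemma lerefl letrans leanti Swo1 ne1 nm1.
have lerefl' : forall x, (fun x y => le y x) x x by [].
have letrans' : forall x y z, (fun x y => le y x) x y -> (fun x y => le y x) y z ->
   (fun x y => le y x) x z by move=> x y z h1 h2; apply: letrans h2 h1.
have leanti' : forall x y, (fun x y => le y x) x y -> (fun x y => le y x) y x -> x = y.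
  by move=> x y h1 h2; apply: leanti.
have [Z2 [[ZS2 Zc2] G22 G32 G42]] := cof_lemma lerefl' letrans' leanti' Swo2 ne2 nm2.
have SZ1 : card_le {x | Z1 x} J.
  apply: card_le_trans SJ1.
  by exists (fun z => exist _ (sval z) (ZS1 _ (svalP z))) => a b /(congr1 sval) /= /sig_irr.
have SZ2 : card_le {x | Z2 x} J.
  apply: card_le_trans SJ2.
  by exists (fun z => exist _ (sval z) (ZS2 _ (svalP z))) => a b /(congr1 sval) /= /sig_irr.
have nJ : card_le nat J by apply: card_le_trans G41 SZ1.
apply: NNPP => nc.
apply: (hp {x | Z1 x} (fun a b => slt le (sval a) (sval b))
           {x | Z2 x} (fun a b => slt (fun x y => le y x) (sval a) (sval b))).
- exact: (@cof_card T le letrans leanti S1 Z1 Swo1 ZS1 G21).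
- exact: (@cof_card T (fun x y => le y x) letrans' leanti' S2 Z2 Swo2 ZS2 G22).
- exact: G41.
- exact: G42.
- exact: card_le_sum.
exists Z1, Z2; split.
- move=> x y [hx|hx] [hy|hy].
  + by have := wo_chain Swo1 (ZS1 _ hx) (ZS1 _ hy).
  + by left; apply: cross; [apply: ZS1|apply: ZS2].
  + by right; apply: cross; [apply: ZS1|apply: ZS2].
  + by have := wo_chain Swo2 (ZS2 _ hx) (ZS2 _ hy); case; [right|left].
- move=> x y hx hy; split; first by apply: cross; [apply: ZS1|apply: ZS2].
  move=> exy; subst y; have [x' [Sx' [lx nx]]] := nm1 _ (ZS1 _ hx).
  by apply: nx; apply: leanti; [exact: lx|apply: cross => //; apply: ZS2].
- move=> [c [h1 h2]]; apply: nc; exists c; split.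
    by move=> a Sa; have [z [Zz laz]] := Zc1 a Sa; apply: letrans laz (proj1 (h1 _ Zz)).
  by move=> b Sb; have [z [Zz lbz]] := Zc2 b Sb; apply: letrans (proj1 (h2 _ Zz)) lbz.
- split.
    exists Z1; split; first by split=> // x hx; exists x => //; apply: lerefl.
    by exists id; exists id.
  move=> Dd [DZ Dc]; apply: G31; split; first by move=> x /DZ /ZS1.
  move=> s Ss; have [z [Zz lsz]] := Zc1 s Ss; have [y Dy lzy] := Dc z Zz.
  by exists y; split=> //; apply: letrans lsz lzy.
- split.
    exists Z2; split; first by split=> // x hx; exists x => //; apply: lerefl.
    by exists id; exists id.
  move=> Dd [DZ Dc]; apply: G32; split; first by move=> x /DZ /ZS2.
  move=> s Ss; have [z [Zz lsz]] := Zc2 s Ss; have [y Dy lzy] := Dc z Zz.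
  by exists y; split=> //; apply: letrans lzy lsz.
Qed.

End Apply2.


Definition swo (K : Type) (lt : K -> K -> Prop) :=
  [/\ (forall a, ~ lt a a), (forall a b c, lt a b -> lt b c -> lt a c),
      (forall a b, lt a b \/ a = b \/ lt b a) & well_founded lt].

Lemma swo_min K (lt : K -> K -> Prop) : swo lt -> forall P : K -> Prop,
  (exists x, P x) -> exists m, P m /\ forall x, P x -> ~ lt x m.
Proof.
move=> [_ _ _ wf] P [x Px]; elim/(well_founded_ind wf): x Px => x IH Px.
case: (EM (exists y, P y /\ lt y x)) => [[y [Py lyx]]|h]; first exact: IH lyx Py.
by exists x; split=> // y Py lyx; apply: h; exists y.
Qed.

Section Img.
Variables (T : Type) (le : T -> T -> Prop).
Hypotheses (lerefl : forall x, le x x)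
  (letrans : forall x y z, le x y -> le y z -> le x z)
  (leanti : forall x y, le x y -> le y x -> x = y).
Variables (K : Type) (lt : K -> K -> Prop) (M : K -> Prop) (F : K -> T).
Hypotheses (ltwo : swo lt) (mono : forall m m', M m -> M m' -> lt m m' -> le (F m) (F m')).

Definition img (P : T) := exists m, M m /\ P = F m.

Lemma mono_le m m' : M m -> M m' -> ~ lt m' m -> le (F m) (F m').
Proof.
move=> Mm Mm' n; case: ltwo => _ _ tri _; case: (tri m m') => [h|[<-|h]]; [exact: mono | exact: lerefl | by case: n].
Qed.

Lemma img_wo : wellord le img.
Proof.
move=> A AS [a Aa].
have ne : exists m, M m /\ A (F m).
  by case: (AS a Aa) => m [Mm e]; exists m; rewrite -e.
have [m [[Mm Am] Hm]] := swo_min ltwo ne.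
exists (F m); split=> // b Ab; have [m' [Mm' e]] := AS b Ab; subst b.
by apply: mono_le => //; apply: Hm.
Qed.

Lemma img_card (J : Type) : card_le {m | M m} J -> card_le {P | img P} J.
Proof.
move=> h; apply: card_le_trans h.
exists (fun P => let p := cid (svalP P) in exist _ (sval p) (proj1 (svalP p))).
have hp : forall P : {P | img P}, sval P = F (sval (cid (svalP P))).
  by move=> P; case: (cid (svalP P)) => m [_ e] /=.
by move=> P Q /(congr1 sval) /= e; apply: sig_irr; rewrite (hp P) (hp Q) e.
Qed.

Lemma img_nomax : ~ (exists m0, M m0 /\ forall m, M m -> le (F m) (F m0)) ->
  forall P, img P -> exists Q, img Q /\ slt le P Q.
Proof.
move=> nm P [m [Mm ->]].
have [m' [Mm' nl]] : exists m', M m' /\ ~ le (F m') (F m).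
  apply: NNPP => h; apply: nm; exists m; split=> // m' Mm'; apply: NNPP => nl.
  by apply: h; exists m'.
exists (F m'); split; first by exists m'.
have lmm : ~ lt m' m by move=> h; apply: nl; apply: mono.
split; first exact: mono_le.
by move=> e; apply: nl; rewrite e; apply: lerefl.
Qed.

End Img.


Section Tree.
Variables (I : Type) (D : (I -> Prop) -> Prop) (hD : is_filter D) (L : Type).

Lemma Dtriv (A : I -> Prop) : (forall i, A i) -> D A.
Proof. by case: hD => h1 h2 _ hA; apply: h2 h1 => i _; apply: hA. Qed.

Lemma Dmono (A B : I -> Prop) : (forall i, A i -> B i) -> D A -> D B.
Proof. by case: hD => _ h2 _; apply: h2. Qed.

Lemma Dand (A B : I -> Prop) : D A -> D B -> D (fun i => A i /\ B i).
Proof. by case: hD => _ _ h3; apply: h3. Qed.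

Lemma Dmono2 (A B C : I -> Prop) : (forall i, A i -> B i -> C i) -> D A -> D B -> D C.
Proof. by move=> h hA hB; apply: Dmono (Dand hA hB) => i [/h]. Qed.

Lemma iseg_refl (s : list L) : init_seg s s.
Proof. by exists [::]; rewrite cats0. Qed.

Lemma iseg_trans (s t u : list L) : init_seg s t -> init_seg t u -> init_seg s u.
Proof. by move=> [a ->] [b ->]; exists (a ++ b); rewrite catA. Qed.

Lemma iseg_anti (s t : list L) : init_seg s t -> init_seg t s -> s = t.
Proof.
move=> [a ->] [b] /(congr1 size); rewrite !size_cat -addnA -{1}[size s]addn0.
by move/eqP; rewrite eqn_add2l eq_sym addn_eq0 => /andP [/eqP /size0nil -> _]; rewrite cats0.
Qed.

Definition cls (f : I -> list L) : redtree D L := exist _ (Deq D f) (ex_intro _ f erefl).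

Lemma Deq_refl (f : I -> list L) : Deq D f f.
Proof. exact: Dtriv. Qed.

Lemma Deq_sym (f g : I -> list L) : Deq D f g -> Deq D g f.
Proof. by apply: Dmono. Qed.

Lemma cls_eq (f g : I -> list L) : Deq D f g -> cls f = cls g.
Proof.
move=> e; apply: sig_irr => /=; apply/funext => h; apply/propext; rewrite /Deq.
split=> h1.
  by apply: (Dmono2 _ e h1) => i e1 e2; rewrite -e1.
by apply: (Dmono2 _ e h1) => i e1 e2; rewrite e1.
Qed.

Lemma Deq_of_eq (f g : I -> list L) : Deq D f = Deq D g -> Deq D f g.
Proof. by move=> e; rewrite e; apply: Deq_refl. Qed.

Lemma cls_surj (P : redtree D L) : exists f, P = cls f.
Proof. case: P => P [f e]; exists f; exact: sig_irr. Qed.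

Lemma DleE (f g : I -> list L) : redtree_le (cls f) (cls g) <-> Dle D f g.
Proof.
split; last by move=> h; exists f, g.
move=> [f' [g' [/= e1 [e2 h]]]].
have E1 := Deq_of_eq e1; have E2 := Deq_of_eq e2.
by apply: Dmono2 (Dand E1 E2) h => i [-> ->].
Qed.

Lemma Dle_refl (f : I -> list L) : Dle D f f.
Proof. by apply: Dtriv => i; apply: iseg_refl. Qed.

Lemma Dle_trans (f g h : I -> list L) : Dle D f g -> Dle D g h -> Dle D f h.
Proof. by apply: Dmono2 => i; apply: iseg_trans. Qed.

Lemma rt_refl (x : redtree D L) : redtree_le x x.
Proof. by case: (cls_surj x) => f ->; apply/DleE; apply: Dle_refl. Qed.

Lemma rt_trans (x y z : redtree D L) : redtree_le x y -> redtree_le y z -> redtree_le x z.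
Proof.
case: (cls_surj x) => f ->; case: (cls_surj y) => g ->; case: (cls_surj z) => h ->.
by move=> /DleE h1 /DleE h2; apply/DleE; apply: Dle_trans h1 h2.
Qed.

Lemma rt_anti (x y : redtree D L) : redtree_le x y -> redtree_le y x -> x = y.
Proof.
case: (cls_surj x) => f ->; case: (cls_surj y) => g ->.
move=> /DleE h1 /DleE h2; apply: cls_eq; apply: Dmono2 h1 h2 => i.
exact: iseg_anti.
Qed.

Lemma tree_t (J : Type) : card_below_t (@redtree_le I D L) J ->
  forall (K : Type) (lt : K -> K -> Prop) (M : K -> Prop) (f : K -> I -> list L),
  swo lt -> (forall m m', M m -> M m' -> lt m m' -> Dle D (f m) (f m')) ->
  (exists m, M m) -> card_le {m | M m} J ->
  exists g, forall m, M m -> Dle D (f m) g.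
Proof.
move=> ht K lt M f wo mono ne MJ.
pose F m := cls (f m).
have monoF : forall m m', M m -> M m' -> lt m m' -> redtree_le (F m) (F m').
  by move=> m m' Mm Mm' h; apply/DleE; apply: mono.
case: (EM (exists m0, M m0 /\ forall m, M m -> redtree_le (F m) (F m0))) => [[m0 [_ H]]|nm].
  by exists (f m0) => m Mm; apply/DleE; apply: H.
have [u Hu] := t_apply rt_refl rt_trans rt_anti ht (img_wo rt_refl wo monoF)
   (let: ex_intro m Mm := ne in ex_intro _ (F m) (ex_intro _ m (conj Mm erefl)))
   (img_nomax rt_refl wo monoF nm) (img_card F MJ).
case: (cls_surj u) => g eg; exists g => m Mm; apply/DleE; rewrite -eg.
by apply: Hu; exists m.
Qed.

Lemma tree_p (J : Type) : card_below_p (@redtree_le I D L) J ->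
  forall (K1 : Type) (lt1 : K1 -> K1 -> Prop) (M1 : K1 -> Prop) (f1 : K1 -> I -> list L)
         (K2 : Type) (lt2 : K2 -> K2 -> Prop) (M2 : K2 -> Prop) (f2 : K2 -> I -> list L),
  swo lt1 -> swo lt2 ->
  (forall m m', M1 m -> M1 m' -> lt1 m m' -> Dle D (f1 m) (f1 m')) ->
  (forall m m', M2 m -> M2 m' -> lt2 m m' -> Dle D (f2 m') (f2 m)) ->
  (exists m, M1 m) -> (exists m, M2 m) ->
  card_le {m | M1 m} J -> card_le {m | M2 m} J ->
  (forall m1 m2, M1 m1 -> M2 m2 -> Dle D (f1 m1) (f2 m2)) ->
  exists c, (forall m, M1 m -> Dle D (f1 m) c) /\ (forall m, M2 m -> Dle D c (f2 m)).
Proof.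
move=> hp K1 lt1 M1 f1 K2 lt2 M2 f2 wo1 wo2 mono1 mono2 [m1 Mm1] [m2 Mm2] MJ1 MJ2 cross.
pose F1 m := cls (f1 m); pose F2 m := cls (f2 m).
pose le' (x y : redtree D L) := redtree_le y x.
have refl' : forall x, le' x x by move=> x; apply: rt_refl.
have monoF1 : forall m m', M1 m -> M1 m' -> lt1 m m' -> redtree_le (F1 m) (F1 m').
  by move=> m m' Mm Mm' h; apply/DleE; apply: mono1.
have monoF2 : forall m m', M2 m -> M2 m' -> lt2 m m' -> le' (F2 m) (F2 m').
  by move=> m m' Mm Mm' h; apply/DleE; apply: mono2.
case: (EM (exists m0, M1 m0 /\ forall m, M1 m -> redtree_le (F1 m) (F1 m0))) => [[m0 [M0 H]]|nm1].
  exists (f1 m0); split=> m Mm; last exact: cross.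
  by apply/DleE; apply: H.
case: (EM (exists m0, M2 m0 /\ forall m, M2 m -> le' (F2 m) (F2 m0))) => [[m0 [M0 H]]|nm2].
  exists (f2 m0); split=> m Mm; first exact: cross.
  by apply/DleE; apply: H.
have [c [Hc1 Hc2]] := p_apply rt_refl rt_trans rt_anti hp
   (img_wo rt_refl wo1 monoF1) (ex_intro _ (F1 m1) (ex_intro _ m1 (conj Mm1 erefl)))
   (img_nomax rt_refl wo1 monoF1 nm1) (img_card F1 MJ1)
   (img_wo refl' wo2 monoF2) (ex_intro _ (F2 m2) (ex_intro _ m2 (conj Mm2 erefl)))
   (img_nomax refl' wo2 monoF2 nm2) (img_card F2 MJ2)
   (fun a b '(ex_intro m (conj Mm ea)) '(ex_intro m' (conj Mm' eb)) =>
      eq_ind_r (fun a => redtree_le a b) (eq_ind_r (fun b => redtree_le (F1 m) b)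
        (proj2 (DleE _ _) (cross m m' Mm Mm')) eb) ea).
case: (cls_surj c) => g eg; exists g; split=> m Mm; apply/DleE; rewrite -eg.
  by apply: Hc1; exists m.
by apply: Hc2; exists m.
Qed.

End Tree.


Section ZornInit.
Variables (K X : Type) (lt : K -> K -> Prop) (leX : X -> X -> Prop).
Hypotheses (wo : swo lt) (leXr : forall x, leX x x)
  (leXt : forall x y z, leX x y -> leX y z -> leX x z).
Variable Inv : (K -> Prop) -> X -> Prop.

Definition initial (A : K -> Prop) := forall a b, A b -> lt a b -> A a.

Lemma initial_lt (A : K -> Prop) : initial A -> (exists k, ~ A k) ->
  exists m, ~ A m /\ forall k, A k <-> lt k m.
Proof.
move=> iA ne; have [m [nAm Hm]] := swo_min wo ne.
exists m; split=> // k; split=> [Ak|lkm].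
  case: wo => irr _ tri _; case: (tri k m) => [//|[e|lmk]].
    by subst k.
  by case: nAm; apply: iA Ak lmk.
by apply: NNPP => nk; apply: (Hm k nk lkm).
Qed.

Lemma Inv_ext (A B : K -> Prop) x : (forall k, A k <-> B k) -> Inv A x -> Inv B x.
Proof. by move=> h; have -> : A = B by apply/funext => k; apply/propext. Qed.

Lemma zorn_init :
  (exists x, Inv (fun _ => False) x) ->
  (forall A x k, (forall k', A k' <-> lt k' k) -> Inv A x ->
     exists x', leX x x' /\ Inv (fun k' => A k' \/ k' = k) x') ->
  (forall (M : K -> Prop) (f : K -> X), (exists m, M m) ->
     (forall m, M m -> exists m', M m' /\ lt m m') ->
     (forall m m', M m -> M m' -> lt m m' -> leX (f m) (f m')) ->
     (forall m, M m -> Inv (fun k => lt k m) (f m)) ->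
     exists x, (forall m, M m -> leX (f m) x) /\ Inv (fun k => exists m, M m /\ lt k m) x) ->
  exists x, Inv (fun _ => True) x.
Proof.
move=> [x0 Hx0] succ lim.
pose Tp := {p : (K -> Prop) * X | initial p.1 /\ Inv p.1 p.2}.
pose R (p q : Tp) := p = q \/ ((forall k, (sval p).1 k -> (sval q).1 k) /\
    (exists k, (sval q).1 k /\ ~ (sval p).1 k) /\ leX (sval p).2 (sval q).2).
have base : initial (fun _ => False) /\ Inv (fun _ => False) x0 by split.
have [p0 Hp0] : exists t, forall s, R t s -> s = t.
  apply: zornP.
  - by move=> t; left.
  - move=> r s t [->//|[h1 [h2 h3]]] [e|[h4 [[kk [k1 k2]] h6]]].
      by subst t; right.
    right; split; first by move=> k0 /h1 /h4.
    split; last exact: leXt h3 h6.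
    by exists kk; split=> // /h1.
  - move=> s t [//|[h1 [[k [k1 k2]] _]]] [//|[h4 _]].
    by case: k2; apply: h4.
  - move=> C Cc.
    pose U k := exists p, C p /\ (sval p).1 k.
    case: (EM (exists p, C p /\ forall k, U k -> (sval p).1 k)) => [[p [Cp Hp]]|nb].
      exists p => q Cq; case: (Cc q p Cq Cp) => // [[e|[_ [[k [k1 k2]] _]]]].
        by left; subst.
      by case: k2; apply: Hp; exists q.
    have nb' : forall p, C p -> exists k, U k /\ ~ (sval p).1 k.
      move=> p Cp; apply: NNPP => h; apply: nb; exists p; split=> // k Uk.
      by apply: NNPP => nk; apply: h; exists k.
    case: (EM (exists p, C p)) => [[p1 Cp1]|nC]; last first.
      by exists (exist (fun p => initial p.1 /\ Inv p.1 p.2) ((fun _ => False), x0) base) => s Cs; case: nC; exists s.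
    have mp : forall p, C p -> exists m, ~ (sval p).1 m /\ forall k, (sval p).1 k <-> lt k m.
      move=> p Cp; apply: initial_lt; first by case: (svalP p).
      by have [k [_ nk]] := nb' p Cp; exists k.
    have uniq : forall p q, C p -> C q -> (forall k, (sval p).1 k <-> (sval q).1 k) -> p = q.
      move=> p q Cp Cq e; case: (Cc p q Cp Cq) => [[//|[_ [[k [k1 k2]] _]]]|[e'|[_ [[k [k1 k2]] _]]]].
      + by case: k2; apply/e.
      + by [].
      + by case: k2; apply/e.
    pose M m := exists p, C p /\ forall k, (sval p).1 k <-> lt k m.
    pose f m := match pselect (M m) with
                | left h => (sval (proj1_sig (cid h))).2 | right _ => x0 end.
    have fE : forall m p, C p -> (forall k, (sval p).1 k <-> lt k m) -> f m = (sval p).2.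
      move=> m p Cp hp; rewrite /f; case: pselect => [h|[]]; last by exists p.
      case: (cid h) => q [Cq hq] /=; congr (sval _).2; apply: uniq => // k.
      by rewrite hq hp.
    have [xs [Hxs Ixs]] : exists x, (forall m, M m -> leX (f m) x) /\
                                  Inv (fun k => exists m, M m /\ lt k m) x.
      apply: lim.
      - by have [m [_ hm]] := mp p1 Cp1; exists m, p1.
      - move=> m [p [Cp hp]]; have [k [[q [Cq qk]] npk]] := nb' p Cp.
        have [mq [nqm hq]] := mp q Cq.
        exists mq; split; first by exists q.
        case: wo => irr _ tri _; case: (tri m mq) => [//|[e|lt']].
          by subst mq; case: npk; apply/hp; apply/hq.
        case: npk; apply/hp; case: wo => _ tr _ _.
        by apply: (tr _ _ _ _ lt'); apply/hq.
      - move=> m m' [p [Cp hp]] [p' [Cp' hp']] lmm'.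
        rewrite (fE _ _ Cp hp) (fE _ _ Cp' hp').
        case: (Cc p p' Cp Cp') => [[->|[_ [_ h]]]|[e|[h _]]] //.
        + by subst p'; case: wo => irr _ _ _; case: (irr m); apply/hp; apply/hp'.
        + have := h m; rewrite hp hp' => /(_ lmm'); case: wo => irr _ _ _ /irr.
          done.
      - move=> m [p [Cp hp]]; rewrite (fE _ _ Cp hp).
        by apply: Inv_ext (proj2 (svalP p)) => k; rewrite hp.
    have UE : forall k, U k <-> exists m, M m /\ lt k m.
      move=> k; split=> [[p [Cp pk]]|[m [[p [Cp hp]] lkm]]].
        have [m [_ hm]] := mp p Cp; exists m; split; first by exists p.
        by apply/hm.
      by exists p; split=> //; apply/hp.
    have iU : initial U.
      move=> a b [p [Cp pb]] lab; exists p; split=> //.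
      by case: (svalP p) => ip _; apply: ip pb lab.
    have IU : Inv U xs by apply: Inv_ext Ixs => k; rewrite UE.
    exists (exist _ (U, xs) (conj iU IU)) => s Cs; right; split=> /=.
      by move=> k sk; exists s.
    split; first by have [k [Uk nk]] := nb' s Cs; exists k.
    have [m [_ hm]] := mp s Cs; rewrite -(fE m s Cs hm); apply: Hxs.
    by exists s.
case: p0 Hp0 => [[A x] [iA IA]] Hp0.
exists x; move: (IA) => IA'; apply: Inv_ext IA' => k; split=> // _; apply: NNPP => nk.
have [m [nAm hm]] := initial_lt iA (ex_intro _ k nk).
have [x' [lx' Ix']] := succ A x m hm IA.
have iA' : initial (fun k' => A k' \/ k' = m).
  move=> a b [Ab|->] lab; first by left; apply: iA Ab lab.
  by left; apply/hm.
have e0 : exist (fun p => initial p.1 /\ Inv p.1 p.2) ((fun k' => A k' \/ k' = m), x') (conj iA' Ix')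
   = exist (fun p => initial p.1 /\ Inv p.1 p.2) (A, x) (conj iA IA).
  apply: Hp0; right; split=> /=; first by move=> k' Ak'; left.
  by split=> //; exists m; split=> //; right.
move: e0 => /(congr1 (fun p => (sval p).1 m)) /= e.
apply: nAm; have h : A m \/ m = m by right.
by rewrite e in h.
Qed.

End ZornInit.


Lemma exists_swo (K : Type) : exists lt : K -> K -> Prop, swo lt.
Proof.
have [R wR] := wochoice.well_ordering_principle {classic K}.
have minP : forall P : K -> Prop, (exists x, P x) ->
    exists z, (P z /\ forall x, P x -> R z x) /\
      forall z', P z' /\ (forall x, P x -> R z' x) -> z = z'.
  move=> P [x Px].
  have ne : wochoice.nonempty [pred y : {classic K} | `[< P y >]].
    by exists x; rewrite inE; apply/asboolP.
  have [z [[zin zlb] zu]] := wR _ ne.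
  exists z; split; first split.
  - by move: zin; rewrite inE => /asboolP.
  - by move=> y Py; apply: zlb; rewrite inE; apply/asboolP.
  move=> z' [Pz' Hz']; apply: zu; split; first by rewrite inE; apply/asboolP.
  by move=> y; rewrite inE => /asboolP /Hz'.
have Rr : forall a, R a a.
  move=> a; have [z [[-> H] _]] := minP (fun y => y = a) (ex_intro _ a erefl).
  exact: H.
have Rt : forall a b, R a b \/ R b a.
  move=> a b; have [z [[Pz H] _]] := minP (fun y => y = a \/ y = b) (ex_intro _ a (or_introl erefl)).
  by case: Pz => ez; subst z; [left|right]; apply: H; [right|left].
have Ra : forall a b, R a b -> R b a -> a = b.
  move=> a b h1 h2; have [z [[Pz H] U]] := minP (fun y => y = a \/ y = b) (ex_intro _ a (or_introl erefl)).
  have za : z = a.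
    by apply: U; split; [left|move=> y [->|->]].
  have zb : z = b.
    by apply: U; split; [right|move=> y [->|->]].
  by rewrite -za -zb.
have Rtr : forall a b c, R a b -> R b c -> R a c.
  move=> a b c h1 h2.
  have [z [[Pz H] _]] := minP (fun y => y = a \/ y = b \/ y = c) (ex_intro _ a (or_introl erefl)).
  case: Pz => [ez|[ez|ez]]; subst z.
  - by apply: H; right; right.
  - have e : a = b by apply: (Ra _ _ h1); apply: H; left.
    by rewrite e.
  - have e : b = c by apply: (Ra _ _ h2); apply: H; right; left.
    by rewrite -e.
exists (fun a b => R a b /\ a <> b); split.
- by move=> a [_].
- move=> a b c [h1 n1] [h2 n2]; split; first exact: Rtr h1 h2.
  by move=> e; subst c; apply: n1; apply: Ra.
- move=> a b; case: (EM (a = b)) => [->|nab]; first by right; left.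
  by case: (Rt a b) => h; [left|right; right]; split=> // e; apply: nab.
- move=> z; apply: NNPP => nz.
  have [m [[nm Hm] _]] := minP (fun y => ~ Acc (fun a b => R a b /\ a <> b) y) (ex_intro _ z nz).
  apply: nm; constructor => y [ym nym]; apply: NNPP => ny.
  by apply: nym; apply: (Ra _ _ ym (Hm _ ny)).
Qed.

Lemma nomax_inf (K : Type) (lt : K -> K -> Prop) (M : K -> Prop) : swo lt ->
  (exists m, M m) -> (forall m, M m -> exists m', M m' /\ lt m m') ->
  card_le nat {m | M m}.
Proof.
move=> [irr tr _ _] [m0 M0] nm.
pose nx (u : {m | M m}) : {m | M m} :=
  let p := cid (nm _ (svalP u)) in exist _ (sval p) (proj1 (svalP p)).
have nxlt : forall u, lt (sval u) (sval (nx u)).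
  by move=> u; rewrite /nx; case: (cid _) => p [].
pose sq n := iter n nx (exist _ m0 M0).
have inc : forall m n, m < n -> lt (sval (sq m)) (sval (sq n)).
  move=> m; elim=> // n IH; rewrite ltnS leq_eqVlt => /orP [/eqP ->|/IH h].
    exact: nxlt.
  exact: tr h (nxlt _).
exists sq => m n e; case: (ltngtP m n) => // h.
  by have := inc _ _ h; rewrite e => /irr.
by have := inc _ _ h; rewrite e => /irr.
Qed.


Definition Pf (tau : vocab) (N : model tau) (I J : Type) (Phi : J -> pformula N I)
  (j : J) (i : I) (y : N) : Prop :=
  aholds (fun k => match k with 0 => y | k'.+1 => (Phi j).2 k' i end) (Phi j).1.

Lemma card_le_prod X Y A : card_le nat A -> card_le X A -> card_le Y A -> card_le (X * Y) A.
Proof.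
move=> h [f fi] [g gi]; apply: card_le_trans (inf_prod h).
by exists (fun p => (f p.1, g p.2)) => [[a b] [c d]] /= [/fi -> /gi ->].
Qed.

Lemma map_in_eq (X Y : Type) (f g : X -> Y) (s : list X) y :
  map f s = map g s -> List.In y s -> f y = g y.
Proof.
elim: s => [|x s IH] //= [e1 e2] [<-|h]; [exact: e1 | exact: IH].
Qed.

Lemma le_foldr_max (s : seq nat) x : x \in s -> x <= foldr maxn 0 s.
Proof.
elim: s => [|y s IH] //=; rewrite inE => /orP [/eqP ->|/IH h].
  by rewrite leq_maxl.
by apply: leq_trans h (leq_maxr _ _).
Qed.

Section Coding.
Variables (tau : vocab) (N : model tau) (I J : Type) (Phi : J -> pformula N I) (L : Type).

Fixpoint tmv (t : term tau) : nat :=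
  match t with
  | tvar n => n.+1
  | tapp f a => foldr maxn 0 (map (fun i => tmv (a i)) (enum 'I_(farity f)))
  end.

Definition amv (phi : atomic tau) : nat :=
  match phi with
  | aeq t1 t2 => maxn (tmv t1) (tmv t2)
  | arel r a => foldr maxn 0 (map (fun i => tmv (a i)) (enum 'I_(rarity r)))
  end.

Lemma teval_ext (v v' : nat -> N) t :
  (forall n, n < tmv t -> v n = v' n) -> teval v t = teval v' t.
Proof.
elim: t => [n|f a IH] /= h; first by apply: h.
congr finterp; apply/funext => i; apply: IH => n hn; apply: h.
apply: leq_trans hn _; apply: le_foldr_max.
by apply/mapP; exists i => //; rewrite mem_enum.
Qed.

Lemma aholds_ext (v v' : nat -> N) phi :
  (forall n, n < amv phi -> v n = v' n) -> aholds v phi <-> aholds v' phi.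
Proof.
case: phi => [t1 t2|r a] /= h.
  rewrite (teval_ext (v' := v') (t := t1)); last first.
    by move=> n hn; apply: h; apply: leq_trans hn (leq_maxl _ _).
  rewrite (teval_ext (v' := v') (t := t2)) //.
  by move=> n hn; apply: h; apply: leq_trans hn (leq_maxr _ _).
have -> : (fun i => teval v (a i)) = (fun i => teval v' (a i)) => //.
apply/funext => i; apply: teval_ext => n hn; apply: h.
apply: leq_trans hn _; apply: le_foldr_max.
by apply/mapP; exists i => //; rewrite mem_enum.
Qed.

Lemma coding (hL : card_le (N + (fun_sym tau + rel_sym tau)) L) (y1 y2 : N) :
  y1 <> y2 ->
  exists k, 0 < k /\ exists code : J -> I -> list L,
    (forall j i, size (code j i) = k) /\
    (forall j j' i, code j i = code j' i -> Pf Phi j i = Pf Phi j' i).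
Proof.
move=> ny; case: (hL) => g gi.
have nab : g (inl y1) <> g (inl y2) by move/gi => [].
case: (fin_or_inf N) => [[ns hns]|hinf].
  exists (size ns); split.
    by case: ns hns => [|//] /(_ y1).
  exists (fun j i => map (fun y => if pselect (Pf Phi j i y) then g (inl y1) else g (inl y2)) ns).
  split=> [j i|j j' i e]; first by rewrite size_map.
  apply/funext => y; apply/propext.
  move: (map_in_eq e (hns y)); case: pselect => h1; case: pselect => h2 E.
  - by split.
  - by case: nab.
  - by case: nab.
  - by split.
have iL : card_le nat L by apply: card_le_trans hinf _; exists (fun y => g (inl y)) => a b /gi [].
have fL : card_le (fun_sym tau) L by exists (fun f => g (inr (inl f))) => a b /gi [].
have rL : card_le (rel_sym tau) L by exists (fun f => g (inr (inr f))) => a b /gi [].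
have NL : card_le N L by exists (fun f => g (inl f)) => a b /gi [].
have lL := list_inj iL.
have [E1 E1i] : card_le (nat + (fun_sym tau * list L)) L.
  by apply: card_le_sum => //; apply: card_le_prod.
have [E2 E2i] : card_le ((L * L) + (rel_sym tau * list L)) L.
  by apply: card_le_sum => //; apply: card_le_prod => //; apply: card_le_refl.
have [E3 E3i] : card_le (L * list N) L.
  by apply: card_le_prod => //; [apply: card_le_refl | apply: card_le_list].
pose ser := fix ser (t : term tau) : L :=
  match t with
  | tvar n => E1 (inl n)
  | tapp f a => E1 (inr (f, map (fun i => ser (a i)) (enum 'I_(farity f))))
  end.
have serE : forall f a, ser (@tapp tau f a) = E1 (inr (f, map (fun i => ser (a i)) (enum 'I_(farity f)))).
  by [].
have seri : forall t t', ser t = ser t' -> t = t'.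
  elim=> [n|f a IH] [n'|f' a'] /= /E1i //; first by case=> ->.
  case=> ef; subst f' => /eq_in_map em; congr tapp; apply/funext => i.
  by apply: IH; apply: em; rewrite mem_enum.
pose aser (phi : atomic tau) : L :=
  match phi with
  | aeq t1 t2 => E2 (inl (ser t1, ser t2))
  | arel r a => E2 (inr (r, map (fun i => ser (a i)) (enum 'I_(rarity r))))
  end.
have aseri : forall p p', aser p = aser p' -> p = p'.
  case=> [t1 t2|r a] [t1' t2'|r' a'] /= /E2i //.
    by case=> /seri -> /seri ->.
  case=> er; subst r' => /eq_in_map em; congr arel; apply/funext => i.
  by apply: seri; apply: em; rewrite mem_enum.
exists 1; split=> //.
exists (fun j i => [:: E3 (aser (Phi j).1, map (fun n => (Phi j).2 n i) (iota 0 (amv (Phi j).1)))]).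
split=> // j j' i [/E3i [/aseri ep el]].
apply/funext => y; apply/propext; rewrite /Pf -ep.
apply: aholds_ext => -[|n] //= hn.
have := el; rewrite -ep => /eq_in_map; apply.
by rewrite mem_iota /= add0n; apply: ltnW.
Qed.

End Coding.


Section Blocks.
Variables (I J L Nt : Type) (Pp : J -> I -> Nt -> Prop) (k : nat) (kpos : 0 < k)
  (code : J -> I -> list L)
  (hsize : forall j i, size (code j i) = k)
  (hinj : forall j j' i, code j i = code j' i -> Pp j i = Pp j' i).

Definition dec (i : I) (b : list L) : Nt -> Prop :=
  match pselect (exists j, code j i = b) with
  | left h => Pp (proj1_sig (cid h)) i | right _ => fun _ => True end.

Lemma dec_code i j : dec i (code j i) = Pp j i.
Proof.
rewrite /dec; case: pselect => [h|[]]; last by exists j.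
by case: (cid h) => j' /= /hinj.
Qed.

Definition Blk (s b : list L) := exists m, m.+1 * k <= size s /\ b = take k (drop (m * k) s).
Definition sat i (s : list L) y := forall b, Blk s b -> dec i b y.
Definition cons i (s : list L) (w : list J) := exists y, sat i s y /\ forall j, List.In j w -> Pp j i y.
Definition aligned (s : list L) := k %| size s.

Lemma blk_cat (s u : list L) m : m.+1 * k <= size s -> take k (drop (m * k) (s ++ u)) = take k (drop (m * k) s).
Proof.
move=> h; have hm : m * k < size s.
  by apply: leq_trans h; rewrite mulSn -addn1 addnC leq_add2r.
rewrite drop_cat hm takel_cat // size_drop.
by rewrite leq_subRL ?(ltnW hm) // addnC -mulSn.
Qed.

Lemma Blk_prefix (s t b : list L) : init_seg s t -> Blk s b -> Blk t b.
Proof.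
move=> [u ->] [m [hm ->]]; exists m; split; last by rewrite blk_cat.
by rewrite size_cat; apply: leq_trans hm (leq_addr _ _).
Qed.

Lemma sat_prefix i (s t : list L) y : init_seg s t -> sat i t y -> sat i s y.
Proof. by move=> h st b /(Blk_prefix h) /st. Qed.

Lemma sat_nil i y : sat i ([::] : list L) y.
Proof. by move=> b [m [hm _]]; move: hm; rewrite leqn0 muln_eq0 /= => /eqP k0; move: (kpos); rewrite k0. Qed.

Lemma blk_last (s u : list L) m : aligned s -> m.+1 * k <= size s + k -> ~ m.+1 * k <= size s ->
  size u = k -> take k (drop (m * k) (s ++ u)) = u.
Proof.
move=> al h1 h2 hu; move: al; rewrite /aligned => /divnK eq.
have em : m = size s %/ k.
  move: h1 h2; rewrite -eq; set q := size s %/ k => h1 h2.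
  have a1 : m.+1 <= q.+1 by rewrite -(leq_pmul2r kpos) [q.+1 * k]mulSn addnC.
  have a2 : q < m.+1 by rewrite -(ltn_pmul2r kpos) ltnNge; apply/negP.
  by rewrite mulnK //; apply/eqP; rewrite eqn_leq; apply/andP; split; rewrite -ltnS.
by rewrite em eq drop_size_cat // -hu take_size.
Qed.

Lemma sat_app i (s : list L) j y : aligned s -> sat i s y -> Pp j i y -> sat i (s ++ code j i) y.
Proof.
move=> al st hp b [m [hm ->]].
case: (boolP (m.+1 * k <= size s)) => h.
  by rewrite blk_cat //; apply: st; exists m.
rewrite (blk_last al _ (negP h) (hsize j i)); first by rewrite dec_code.
by move: hm; rewrite size_cat hsize.
Qed.

Lemma sat_code i (s : list L) j y : aligned s -> sat i (s ++ code j i) y -> Pp j i y.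
Proof.
move=> al st; rewrite -dec_code; apply: st.
exists (size s %/ k); split.
  by rewrite mulSn size_cat hsize (divnK al) addnC.
by rewrite (divnK al) drop_size_cat // -(hsize j i) take_size.
Qed.

Lemma aligned_cat (s : list L) j i : aligned s -> aligned (s ++ code j i).
Proof. by rewrite /aligned size_cat hsize => h; rewrite dvdn_addr // dvdnn. Qed.

Lemma aligned_nil : aligned ([::] : list L).
Proof. by rewrite /aligned dvdn0. Qed.

Lemma iseg_take (s : list L) n m : n <= m -> init_seg (take n s) (take m s).
Proof.
move=> h; exists (drop n (take m s)); by rewrite -{1}(take_takel s h) cat_take_drop.
Qed.

Lemma iseg_take_s (s : list L) n : init_seg (take n s) s.
Proof. by exists (drop n s); rewrite cat_take_drop. Qed.

Definition alignT (s : list L) := take (size s %/ k * k) s.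

Lemma alignT_prefix (s : list L) : init_seg (alignT s) s.
Proof. exact: iseg_take_s. Qed.

Lemma alignT_aligned (s : list L) : aligned (alignT s).
Proof.
by rewrite /aligned /alignT size_takel ?leq_trunc_div // dvdn_mull // dvdnn.
Qed.

Lemma alignT_max (t s : list L) : aligned t -> init_seg t s -> init_seg t (alignT s).
Proof.
move=> al [u eu]; have -> : t = take (size t) s by rewrite eu takel_cat // take_size.
apply: iseg_take; rewrite -(divnK al) leq_pmul2r // leq_div2r //.
by rewrite eu size_cat leq_addr.
Qed.

(* truncation to the longest aligned prefix consistent with w *)
Section Trunc.
Variables (i : I) (s : list L) (w : list J).
Definition Pq q := cons i (take (q * k) s) w.
Fixpoint bq n := if n is n'.+1 then (if pselect (Pq n) then n else bq n') else 0.

Lemma bq_spec n : bq n <= n /\ forall q, q <= n -> Pq q -> q <= bq n /\ Pq (bq n).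
Proof.
elim: n => [|n [IH1 IH2]] /=.
  by split=> // q; rewrite leqn0 => /eqP ->.
case: pselect => h; first by split=> // q _ _; split.
split; first exact: leq_trans IH1 (leqnSn _).
move=> q; rewrite leq_eqVlt => /orP [/eqP -> //|]; rewrite ltnS; exact: IH2.
Qed.

Definition trunc := take (bq (size s %/ k) * k) s.

Lemma trunc_prefix : init_seg trunc s.
Proof. exact: iseg_take_s. Qed.

Lemma trunc_aligned : aligned trunc.
Proof.
rewrite /aligned /trunc size_takel ?dvdn_mull ?dvdnn //.
have [h _] := bq_spec (size s %/ k).
by apply: leq_trans (leq_trunc_div (size s) k); rewrite leq_pmul2r.
Qed.

Lemma trunc_max (t : list L) : aligned t -> init_seg t s -> cons i t w -> init_seg t trunc.
Proof.
move=> al [u eu] ct.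
have et : t = take (size t %/ k * k) s by rewrite (divnK al) eu takel_cat // take_size.
have hq : size t %/ k <= size s %/ k by apply: leq_div2r; rewrite eu size_cat leq_addr.
have [_ H] := bq_spec (size s %/ k).
have pq : Pq (size t %/ k) by rewrite /Pq -et.
have [h1 _] := H _ hq pq.
by rewrite et; apply: iseg_take; rewrite leq_pmul2r.
Qed.

Lemma trunc_cons : cons i ([::] : list L) w -> cons i trunc w.
Proof.
move=> h; have [_ H] := bq_spec (size s %/ k).
have p0 : Pq 0 by rewrite /Pq mul0n take0.
have [_ h2] := H 0 (leq0n _) p0.
exact: h2.
Qed.

End Trunc.

Lemma cons_prefix i (s t : list L) w : init_seg s t -> cons i t w -> cons i s w.
Proof. by move=> h [y [st hy]]; exists y; split=> //; apply: sat_prefix st. Qed.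

End Blocks.


Section Core.
Variables (I : Type) (D : (I -> Prop) -> Prop) (hD : is_filter D) (L J Nt : Type)
  (Pp : J -> I -> Nt -> Prop) (k : nat) (kpos : 0 < k) (code : J -> I -> list L)
  (hsize : forall j i, size (code j i) = k)
  (hinj : forall j j' i, code j i = code j' i -> Pp j i = Pp j' i)
  (hsmall : card_below_min_tp (@redtree_le I D L) J)
  (hfin0 : forall w : list J, D (fun i => cons Pp k code i [::] w)).

Definition good (f : I -> list L) :=
  (forall i, aligned k (f i)) /\ forall w, D (fun i => cons Pp k code i (f i) w).

Definition Cont j (f : I -> list L) := D (fun i => forall y, sat Pp k code i (f i) y -> Pp j i y).

Lemma Cont_mono f g j : Dle D f g -> Cont j f -> Cont j g.
Proof.
move=> h1 h2; rewrite /Cont; apply: (Dmono2 hD _ h1 h2) => i h1' h2' y sy.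
by apply: h2'; exact: (sat_prefix kpos h1' sy).
Qed.

Lemma inner (ltJ : J -> J -> Prop) (M : J -> Prop) (f : J -> I -> list L) :
  swo ltJ -> (exists m, M m) -> (forall m, M m -> exists m', M m' /\ ltJ m m') ->
  (forall m m', M m -> M m' -> ltJ m m' -> Dle D (f m) (f m')) ->
  (forall m, M m -> good (f m)) ->
  forall g, (forall m, M m -> Dle D (f m) g) ->
  exists d, good d /\ forall m, M m -> Dle D (f m) d.
Proof.
move=> woJ neM nmM mono gf g hg.
have [ltL woL] := exists_swo (list J).
have nJ : card_le nat J.
  apply: card_le_trans (nomax_inf woJ neM nmM) _.
  by exists sval => a b /sig_irr.
have MJ : card_le {m | M m} J by exists sval => a b /sig_irr.
have LJ : card_le (list J) J by apply: card_le_list nJ (card_le_refl J).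
pose Inv (B : list J -> Prop) (d : I -> list L) :=
  (forall i, aligned k (d i)) /\ (forall m, M m -> Dle D (f m) d) /\
  (forall w, B w -> D (fun i => cons Pp k code i (d i) w)).
have leXr : forall d : I -> list L, (fun d d' => Dle D d' d) d d by move=> d; apply: Dle_refl.
have leXt : forall x y z : I -> list L, (fun d d' => Dle D d' d) x y ->
    (fun d d' => Dle D d' d) y z -> (fun d d' => Dle D d' d) x z.
  by move=> x y z h1 h2; exact: (Dle_trans hD h2 h1).
have alm : forall m, M m -> forall i, aligned k (f m i) by move=> m /gf [].
have [d Hd] : exists d, Inv (fun _ => True) d.
  apply: (@zorn_init (list J) (I -> list L) ltL (fun d d' => Dle D d' d) woL leXr leXt Inv).
- exists (fun i => alignT k (g i)); split; first by move=> i; apply: alignT_aligned.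
  split=> // m Mm; rewrite /Dle; apply: (Dmono hD _ (hg m Mm)) => i h.
  exact: (alignT_max kpos (alm m Mm i) h).
- move=> B d w0 _ [ald [fd Bd]].
  exists (fun i => trunc Pp k code i (d i) w0); split.
    by rewrite /Dle; apply: (Dtriv hD) => i; apply: trunc_prefix.
  split; first by move=> i; apply: trunc_aligned.
  split.
    move=> m Mm; have [_ gw] := gf m Mm.
    rewrite /Dle; apply: (Dmono2 hD _ (fd m Mm) (gw w0)) => i h1 h2.
    exact: (trunc_max kpos (alm m Mm i) h1 h2).
  move=> w [Bw|->].
    by apply: (Dmono hD _ (Bd w Bw)) => i; apply: (cons_prefix kpos (trunc_prefix _ _ _ _ _ _)).
  by apply: (Dmono hD _ (hfin0 w0)) => i; apply: trunc_cons.
- move=> M2 dd neM2 nmM2 mono2 Inv2.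
  have M2J : card_le {m | M2 m} J.
    by apply: card_le_trans LJ; exists sval => a b /sig_irr.
  have [c [hc1 hc2]] := tree_p hD (proj2 hsmall) woJ woL mono mono2 neM neM2 MJ M2J
    (fun m1 m2 Mm1 Mm2 => proj1 (proj2 (Inv2 m2 Mm2)) m1 Mm1).
  have hc2' : forall p, M2 p -> Dle D (fun i => alignT k (c i)) (dd p).
    move=> p Mp.
    have h0 : Dle D (fun i => alignT k (c i)) c.
      by rewrite /Dle; apply: (Dtriv hD) => i; apply: alignT_prefix.
    exact: (Dle_trans hD h0 (hc2 p Mp)).
  exists (fun i => alignT k (c i)); split; first exact: hc2'.
  split; first by move=> i; apply: alignT_aligned.
  split.
    move=> m Mm; rewrite /Dle; apply: (Dmono hD _ (hc1 m Mm)) => i h.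
    exact: (alignT_max kpos (alm m Mm i) h).
  move=> w [p [Mp lwp]]; have [_ [_ H]] := Inv2 p Mp.
  apply: (Dmono2 hD _ (hc2' p Mp) (H w lwp)) => i h1 h2.
  exact: (cons_prefix kpos h1 h2).
case: Hd => ald [fd Hw]; exists d; split=> //; split=> // w.
exact: Hw.
Qed.

Lemma outer : exists f, good f /\ forall j, Cont j f.
Proof.
have [ltJ woJ] := exists_swo J.
pose Inv (A : J -> Prop) (f : I -> list L) := good f /\ forall j, A j -> Cont j f.
have leXr : forall f : I -> list L, Dle D f f by move=> f; apply: Dle_refl.
have leXt : forall x y z : I -> list L, Dle D x y -> Dle D y z -> Dle D x z.
  by move=> x y z h1 h2; exact: (Dle_trans hD h1 h2).
have [f [gf Hf]] : exists f, Inv (fun _ => True) f.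
  apply: (@zorn_init J (I -> list L) ltJ (@Dle I D L) woJ leXr leXt Inv).
  - exists (fun _ => [::]); split=> //; split.
      by move=> i; apply: aligned_nil.
    exact: hfin0.
  - move=> A f k0 _ [[alf consf] Cf].
    pose f' i := if pselect (cons Pp k code i (f i) [:: k0]) then f i ++ code k0 i else f i.
    have ff' : Dle D f f'.
      rewrite /Dle; apply: (Dtriv hD) => i; rewrite /f'; case: pselect => [hh|hh].
        by exists (code k0 i).
      exact: iseg_refl.
    exists f'; split=> //; split; first split.
    + move=> i; rewrite /f'; case: pselect => [hh|hh]; [exact: aligned_cat | exact: alf].
    + move=> w; apply: (Dmono hD _ (consf (k0 :: w))) => i [y [sy hy]].
      have c1 : cons Pp k code i (f i) [:: k0].
        by exists y; split=> // j [<-|[]]; apply: hy; left.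
      rewrite /f'; case: pselect => [hh|hh] //.
      exists y; split; first exact: (sat_app kpos hsize hinj (alf i) sy (hy k0 (or_introl erefl))).
      by move=> j hj; apply: hy; right.
    + move=> j [Aj|->]; first exact: (Cont_mono ff' (Cf j Aj)).
      rewrite /Cont; apply: (Dmono hD _ (consf [:: k0])) => i c1 y.
      rewrite /f'; case: pselect => [hh|hh] // sy.
      exact: (sat_code hsize hinj (alf i) sy).
  - move=> M fM neM nmM monoM InvM.
    have MJ : card_le {m | M m} J by exists sval => a b /sig_irr.
    have [g hg] := tree_t hD (proj1 hsmall) woJ monoM neM MJ.
    have [d [gd hd]] := inner woJ neM nmM monoM (fun m Mm => proj1 (InvM m Mm)) hg.
    exists d; split=> //; split=> // j [m [Mm ljm]].
    exact: (Cont_mono (hd m Mm) (proj2 (InvM m Mm) j ljm)).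
by exists f; split=> // j; apply: Hf.
Qed.

End Core.

Unset Implicit Arguments.

Theorem mainTheorem3
    (I : Type) (D : (I -> Prop) -> Prop) (hD : is_filter D)
    (tau : vocab) (N : model tau)
    (* L stands for the set of ordinals < lambda = ||N|| + |tau_N| *)
    (L : Type) (hL : card_eq L (carrier N + (fun_sym tau + rel_sym tau))%type)
    (J : Type) (Phi : J -> pformula N I)
    (hsmall : card_below_min_tp (@redtree_le I D L) J)
    (hfin : forall l : list J,
        exists x : I -> N, forall j, List.In j l -> realizes D x (Phi j)) :
  exists x : I -> N, forall j, realizes D x (Phi j).
Proof.
case: (EM (forall y y' : N, y = y')) => [sub|nsub].
  have [x _] := hfin [::].
  exists x => j; have [xj hj] := hfin [:: j].
  have -> : x = xj by apply/funext => i; apply: sub.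
  by apply: hj; left.
have [y1 [y2 ny]] : exists y1 y2 : N, y1 <> y2.
  apply: NNPP => h; apply: nsub => y y'; apply: NNPP => ne; apply: h; exists y, y'; exact: ne.
have hL' : card_le (N + (fun_sym tau + rel_sym tau)) L.
  by apply: card_le_eq; apply: card_eq_sym.
have [k [kpos [code [hsize hinj]]]] := coding Phi hL' ny.
pose Pp := Pf Phi.
have hfin0 : forall w : list J, D (fun i => cons Pp k code i [::] w).
  move=> w; have [x hx] := hfin w.
  have : D (fun i => forall j, List.In j w -> Pp j i (x i)).
    elim: w hx => [|j w IH] hx.
      by apply: (Dtriv hD) => i j [].
    have h1 : D (fun i => Pp j i (x i)) := hx j (or_introl erefl).
    have h2 := IH (fun j' h => hx j' (or_intror h)).
    by apply: (Dmono2 hD _ h1 h2) => i a b j' [<-|h]; [exact: a | exact: b].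
  apply: (Dmono hD) => i H; exists (x i); split; [exact: sat_nil | exact: H].
have [f [[alf consf] Cf]] := outer hD kpos hsize hinj hsmall hfin0.
pose x i := match pselect (exists y, sat Pp k code i (f i) y) with
            | left h => proj1_sig (cid h) | right _ => y1 end.
exists x => j.
change (D (fun i => Pp j i (x i))).
apply: (Dmono2 hD _ (consf [::]) (Cf j)) => i [y [sy _]] H.
apply: H; rewrite /x; case: pselect => [h|[]]; last by exists y.
by case: (cid h).
Qed.
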